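(* If a signed graph $SG$ has a negative loop $e$, then $H^i_b(SG)\cong H^i_b(SG-e)$ for all $i$.
   Context: Signed graphs: $SG=(G,\sigma)$, $G$ finite (loops, multiple edges allowed), $\sigma:E(G)\to\{\pm1\}$; a negative loop is a loop with sign $-1$; $SG-e$ deletes $e$. Negative circuit: product of edge signs $-1$ (a loop is a circuit of one edge); balanced = no negative circuit. $[G:s]$, $[SG:s]$: spanning subgraph with edge set $s$. Balanced complex: Fix a total order on $E(G)$. An enhanced state of $G$ is $S=(s,c)$, $c$ labels each component of $[G:s]$ by $1$ or $x$; $j(S)$ = number of $x$-labels (grading). With $m(1,1)=1$, $m(1,x)=m(x,1)=x$, $m(x,x)=0$: for $e'\notin s$, $S_{e'}=(s\cup\{e'\},c_{e'})$ where a component containing both ends of $e'$ keeps its label and if $e'$ joins components $E_i,E_j$ the merged one gets $m(c(E_i),c(E_j))$ ($S_{e'}=0$ if both are $x$). $d(S)=\sum_{e'\notin s}(-1)^{n(e')}S_{e'}$, $n(e')$ = number of edges of $s$ preceding $e'$. $H^i_b(SG)$: cohomology of $C^\bullet_b(SG)$, free on enhanced states with $[SG:s]$ balanced, differential $d_b=f_b\circ d$, where $f_b$ sends an enhanced state to itself if $[SG:s]$ is balanced and to $0$ otherwise. *)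

(* Defs.v *)
From mathcomp Require Import all_boot all_order all_algebra.
Set Implicit Arguments. Unset Strict Implicit. Unset Printing Implicit Defensive.
Import GRing.Theory.
Local Open Scope ring_scope.

(* A signed graph: vertices 'I_nv, edges 'I_ne (the total order on edges is
   the natural order of 'I_ne), each edge has two (possibly equal) endpoints,
   neg e = true means sigma(e) = -1. Loops and multiple edges allowed. *)
Record SGraph := SG {
  nv : nat;
  ne : nat;
  ends : 'I_ne -> 'I_nv * 'I_nv;
  neg : 'I_ne -> bool }.
Arguments ends s _ : clear implicits.
Arguments neg s _ : clear implicits.

Definition is_neg_loop (G : SGraph) (e : 'I_(ne G)) : bool :=
  ((ends G e).1 == (ends G e).2) && neg G e.

(* SG - e : delete edge e; remaining edges keep their relative order. *)
Definition del_edge (G : SGraph) (e : 'I_(ne G)) : SGraph :=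
  @SG (nv G) (ne G).-1 (fun j => ends G (lift e j)) (fun j => neg G (lift e j)).

Definition joins (G : SGraph) (e : 'I_(ne G)) (u v : 'I_(nv G)) : bool :=
  (ends G e == (u, v)) || (ends G e == (v, u)).

Definition adj (G : SGraph) (s : {set 'I_(ne G)}) : rel 'I_(nv G) :=
  fun u v => [exists e in s, joins e u v].

(* A circuit in [G:s]: distinct edges es = e_1..e_k (k >= 1) and distinct
   vertices vs = v_0..v_{k-1}, with e_j joining v_{j-1} and v_j (indices mod k).
   k = 1 is a loop. *)
Definition circuit (G : SGraph) (s : {set 'I_(ne G)})
  (es : seq 'I_(ne G)) (vs : seq 'I_(nv G)) : bool :=
  [&& (0 < size es)%N, size vs == size es, uniq es, uniq vs,
      all (fun e => e \in s) es &
      all (fun t => joins t.1 t.2.1 t.2.2) (zip es (zip vs (rot 1 vs)))].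

(* [SG:s] is balanced: no negative circuit (sign product -1, i.e. an odd
   number of negative edges). *)
Definition balanced (G : SGraph) (s : {set 'I_(ne G)}) : Prop :=
  ~ exists es vs, circuit s es vs && odd (count (neg G) es).

(* Enhanced-state candidates: (s, c) with c a labelling of the vertices,
   true = x, false = 1. *)
Definition St (G : SGraph) : finType :=
  ({set 'I_(ne G)} * {ffun 'I_(nv G) -> bool})%type.

(* c is constant on the components of [G:s], i.e. c is a labelling of the
   components of [G:s]. *)
Definition valid (G : SGraph) (S : St G) : bool :=
  [forall u, forall v, connect (adj S.1) u v ==> (S.2 u == S.2 v)].

(* S_{e'} (None stands for 0). *)
Definition Sedge (G : SGraph) (S : St G) (e : 'I_(ne G)) : option (St G) :=
  let s := S.1 in let c := S.2 in
  let u := (ends G e).1 in let w := (ends G e).2 in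
  if connect (adj s) u w then Some (e |: s, c)
  else if c u && c w then None
  else Some (e |: s, [ffun v => if connect (adj s) u v || connect (adj s) w v
                               then c u || c w else c v]).

Definition nprec (G : SGraph) (s : {set 'I_(ne G)}) (e : 'I_(ne G)) : nat :=
  #|[set e0 in s | (e0 < e)%N]|.

(* coefficient of T in d(S) *)
Definition dcoef (G : SGraph) (S T : St G) : int :=
  \sum_(e : 'I_(ne G) | e \notin S.1)
     (-1) ^+ (nprec S.1 e) * ((Sedge S e == Some T) : int).

(* Z-valued cochains: formal Z-combinations of enhanced states *)
Definition cochain (G : SGraph) := {ffun St G -> int}.

Definition dd (G : SGraph) (x : cochain G) : cochain G :=
  [ffun T => \sum_(S : St G) x S * dcoef S T].

(* x lies in C^i_b(SG): supported on enhanced states with [SG:s] balanced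
   and |s| = i *)
Definition inCb (G : SGraph) (i : nat) (x : cochain G) : Prop :=
  forall S, x S != 0 -> [/\ valid S, balanced S.1 & #|S.1| = i].

(* y = d_b x  (d_b = f_b o d: keep the balanced states) *)
Definition is_db (G : SGraph) (x y : cochain G) : Prop :=
  forall T, (balanced T.1 -> y T = dd x T) /\ (~ balanced T.1 -> y T = 0).

Definition cocycle (G : SGraph) (i : nat) (z : cochain G) : Prop :=
  inCb i z /\ is_db z 0.

(* coboundaries of degree i (C^{-1} = 0) *)
Definition coboundary (G : SGraph) (i : nat) (y : cochain G) : Prop :=
  inCb i y /\
  match i with
  | 0 => y = 0
  | i'.+1 => exists x, inCb i' x /\ is_db x y
  end.

(* f : C^i_b(G1) -> C^i_b(G2) induces a group homomorphism
   H^i_b(G1) -> H^i_b(G2) (well-defined on classes, additive on classes). *)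
Definition induces_hom (G1 G2 : SGraph) (i : nat) (f : cochain G1 -> cochain G2) : Prop :=
  [/\ forall z, cocycle i z -> cocycle i (f z),
      forall z z', cocycle i z -> cocycle i z' -> coboundary i (z - z') ->
                   coboundary i (f z - f z') &
      forall z z', cocycle i z -> cocycle i z' ->
                   coboundary i (f (z + z') - f z - f z')].

(* H^i_b(G1) ~= H^i_b(G2) as abelian groups: there are maps on
   representatives inducing mutually inverse homomorphisms on cohomology. *)
Definition Hb_iso (G1 G2 : SGraph) (i : nat) : Prop :=
  exists (f : cochain G1 -> cochain G2) (g : cochain G2 -> cochain G1),
    [/\ induces_hom i f, induces_hom i g,
        forall z, cocycle i z -> coboundary i (g (f z) - z) &
        forall z, cocycle i z -> coboundary i (f (g z) - z)].

(* Main.v *)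
Require Import Defs.
From mathcomp Require Import all_boot all_order all_algebra.
From mathcomp Require Import zify.
Set Implicit Arguments. Unset Strict Implicit. Unset Printing Implicit Defensive.
Import GRing.Theory.
Local Open Scope ring_scope.

Lemma lift_ltn n (h : 'I_n) (i j : 'I_n.-1) : (lift h i < lift h j)%N = (i < j)%N.
Proof. rewrite /= /bump; case: (leqP h i); case: (leqP h j) => /= *; lia. Qed.

Lemma all_zip_mapl (A B C : Type) (f : A -> B) (P : pred (B * C)) (s : seq A) (t : seq C) :
  all P (zip (map f s) t) = all (fun p => P (f p.1, p.2)) (zip s t).
Proof. elim: s t => [|a s IH] [|c t] //=; by rewrite IH. Qed.

Definition phi (G : SGraph) (e : 'I_(ne G)) (T : St (del_edge e)) : St G :=
  (lift e @: T.1, T.2).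
Arguments phi : simpl never.

Lemma phi_inj (G : SGraph) (e : 'I_(ne G)) : injective (@phi G e).
Proof.
move=> [s c] [s' c'] [] /(imset_inj (@lift_inj _ e)) -> ->; by [].
Qed.

Lemma adj_del (G : SGraph) (e : 'I_(ne G)) (s : {set 'I_(ne (del_edge e))}) (u v : 'I_(nv G)) :
  adj (lift e @: s) u v = adj (G:=del_edge e) s u v.
Proof.
apply/existsP/existsP => [[x /andP [/imsetP [j js ->] J]]|[j /andP [js J]]].
  by exists j; rewrite js.
by exists (lift e j); rewrite imset_f.
Qed.

Lemma connect_del (G : SGraph) (e : 'I_(ne G)) (s : {set 'I_(ne (del_edge e))}) (u v : 'I_(nv G)) :
  connect (adj (lift e @: s)) u v = connect (adj (G:=del_edge e) s) u v.
Proof. by apply: eq_connect => x y; apply: adj_del. Qed.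

Lemma valid_phi (G : SGraph) (e : 'I_(ne G)) (T : St (del_edge e)) : valid (phi T) = valid T.
Proof.
apply/forallP/forallP => H u; apply/forallP => v; have /forallP/(_ v) := H u;
  by rewrite /phi /= connect_del.
Qed.

Lemma circuit_del (G : SGraph) (e : 'I_(ne G)) (s : {set 'I_(ne (del_edge e))}) es vs :
  circuit (lift e @: s) (map (lift e) es) vs = circuit (G:=del_edge e) s es vs.
Proof.
rewrite /circuit size_map (map_inj_uniq (@lift_inj _ e)) all_map all_zip_mapl.
congr [&& _, _, _, _, _ & _].
by apply: eq_all => x /=; rewrite mem_imset //; apply: lift_inj.
Qed.

Lemma map_lift_ex n (h : 'I_n) (es : seq 'I_n) :
  all (fun x => x != h) es -> exists es', es = map (lift h) es'.
Proof.
elim: es => [|x es IH] /=; first by exists [::].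
case/andP => xh /IH [es' ->]; rewrite eq_sym in xh.
have [j -> _] := unlift_some xh; by exists (j :: es').
Qed.

Lemma balanced_del (G : SGraph) (e : 'I_(ne G)) (s : {set 'I_(ne (del_edge e))}) :
  balanced (lift e @: s) <-> balanced (G:=del_edge e) s.
Proof.
split=> H [es [vs /andP [C O]]]; apply: H.
  exists (map (lift e) es), vs; rewrite circuit_del C /= count_map; exact: O.
have [es' Hes] : exists es', es = map (lift e) es'.
  apply: map_lift_ex; case/and5P: C => _ _ _ _ /andP [A _].
  apply/allP => x xes; have /imsetP [j _ ->] := allP A x xes.
  by rewrite eq_sym neq_lift.
subst es; exists es', vs; rewrite -circuit_del C /=; by rewrite count_map in O.
Qed.

Lemma negloop_unbal (G : SGraph) (e : 'I_(ne G)) (s : {set 'I_(ne G)}) : is_neg_loop e -> e \in s -> ~ balanced s.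
Proof.
move=> /andP [L N] es H; apply: H; exists [:: e], [:: (ends G e).1].
rewrite /circuit /= es N /= /joins andbT.
by case: (ends G e) L => a b /= /eqP ->; rewrite eqxx.
Qed.

Lemma notin_lift n (h : 'I_n) (A : {pred 'I_n.-1}) : h \notin lift h @: A.
Proof. by apply/imsetP => [[k _ E]]; move: (neq_lift h k); rewrite -E eqxx. Qed.

Lemma nprec_del (G : SGraph) (e : 'I_(ne G)) (s : {set 'I_(ne (del_edge e))}) j :
  nprec (lift e @: s) (lift e j) = nprec (G:=del_edge e) s j.
Proof.
rewrite /nprec -(card_imset _ (@lift_inj _ e)); apply: eq_card => x; rewrite !inE; case: (unliftP e x) => [k ->|->].
  by rewrite !mem_imset ?inE ?lift_ltn //; apply: lift_inj.
by rewrite (negbTE (notin_lift _ _)) (negbTE (notin_lift _ _)).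
Qed.

Lemma Sedge_del (G : SGraph) (e : 'I_(ne G)) (S : St (del_edge e)) j :
  Sedge (phi S) (lift e j) = omap (@phi G e) (Sedge S j).
Proof.
case: S => s c; rewrite /Sedge /phi /= !connect_del.
case: ifP => _ /=; first by rewrite imsetU1.
case: ifP => _ //=; rewrite imsetU1; congr (Some (_, _)).
by apply/ffunP => v; rewrite !ffunE !connect_del.
Qed.

Lemma Sedge_in (G : SGraph) (S T : St G) e0 : Sedge S e0 = Some T -> e0 \in T.1.
Proof.
rewrite /Sedge; case: ifP => _; first by case=> <- /=; rewrite setU11.
by case: ifP => // _ [<-] /=; rewrite setU11.
Qed.

Lemma dcoef_del (G : SGraph) (e : 'I_(ne G)) (S T : St (del_edge e)) :
  dcoef (phi S) (phi T) = dcoef (G:=del_edge e) S T.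
Proof.
rewrite /dcoef (bigD1_ord e) ?notin_lift //=.
have -> : (Sedge (phi S) e == Some (phi T)) = false.
  apply/eqP => /Sedge_in; by rewrite /= (negbTE (notin_lift _ _)).
rewrite mulr0 add0r; apply: eq_big => j.
  by rewrite mem_imset //; apply: lift_inj.
move=> _; rewrite nprec_del Sedge_del; congr (_ * _).
case: (Sedge S j) => [x|] //=.
have -> : (Some (phi x) == Some (phi T)) = (Some x == Some T) by apply/eqP/eqP => [E|[->]] //; move: (congr1 (odflt (phi T)) E) => /= /phi_inj ->.
by [].
Qed.

Definition fmap (G : SGraph) (e : 'I_(ne G)) (x : cochain G) : cochain (del_edge e) :=
  [ffun T => x (phi T)].
Definition gmap (G : SGraph) (e : 'I_(ne G)) (y : cochain (del_edge e)) : cochain G :=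
  [ffun T => \sum_(T' | phi T' == T) y T'].

Lemma gmap_phi (G : SGraph) (e : 'I_(ne G)) (y : cochain (del_edge e)) T : gmap y (phi T) = y T.
Proof.
rewrite /gmap ffunE.
under eq_bigl => T' do rewrite (inj_eq (@phi_inj G e)).
by rewrite big_pred1_eq.
Qed.

Lemma gmap_out (G : SGraph) (e : 'I_(ne G)) (y : cochain (del_edge e)) (T : St G) :
  e \in T.1 -> gmap y T = 0.
Proof.
move=> eT; rewrite /gmap ffunE big_pred0 // => T'; apply/eqP => E.
by move: eT; rewrite -E /phi /= (negbTE (notin_lift _ _)).
Qed.

Lemma phi_surj (G : SGraph) (e : 'I_(ne G)) (T : St G) :
  e \notin T.1 -> exists T', T = @phi G e T'.
Proof.
case: T => s c /= es; exists ([set j | lift e j \in s], c); rewrite /phi /=.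
congr (_, _); apply/setP => x; case: (unliftP e x) => [k ->|->].
  by rewrite mem_imset ?inE //; apply: lift_inj.
by rewrite (negbTE (notin_lift _ _)) (negbTE es).
Qed.

Lemma sum_gmap (G : SGraph) (e : 'I_(ne G)) (y : cochain (del_edge e)) (h : St G -> int) :
  \sum_S gmap y S * h S = \sum_T' y T' * h (@phi G e T').
Proof.
under eq_bigr => S _ do rewrite ffunE big_distrl /=.
rewrite (exchange_big_dep predT) //=; apply: eq_bigr => T' _.
under eq_bigl => S do rewrite eq_sym.
by rewrite big_pred1_eq.
Qed.

Lemma dd_gmap (G : SGraph) (e : 'I_(ne G)) (y : cochain (del_edge e)) T :
  dd (gmap y) (phi T) = dd (G:=del_edge e) y T.
Proof.
rewrite /dd !ffunE sum_gmap; apply: eq_bigr => S _; by rewrite dcoef_del.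
Qed.

Lemma g_f (G : SGraph) (e : 'I_(ne G)) (x : cochain G) :
  (forall S, x S != 0 -> e \notin S.1) -> gmap (fmap e x) = x.
Proof.
move=> H; apply/ffunP => T; case: (boolP (e \in T.1)) => eT.
  rewrite gmap_out //; apply/esym/eqP; apply: contraLR eT; exact: H.
by have [T' ->] := phi_surj eT; rewrite gmap_phi ffunE.
Qed.

Lemma f_g (G : SGraph) (e : 'I_(ne G)) (y : cochain (del_edge e)) : fmap e (gmap y) = y.
Proof. by apply/ffunP => T; rewrite ffunE gmap_phi. Qed.

Lemma inCb0 (G : SGraph) i : inCb (G:=G) i 0.
Proof. by move=> S; rewrite ffunE eqxx. Qed.

Lemma isdb00 (G : SGraph) : is_db (G:=G) 0 0.
Proof.
move=> T; split=> _; rewrite ffunE //.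
by rewrite /dd ffunE big1 // => S _; rewrite ffunE mul0r.
Qed.

Lemma cob0 (G : SGraph) i : coboundary (G:=G) i 0.
Proof.
split; first exact: inCb0.
case: i => [|k] //; exists 0; split; [exact: inCb0 | exact: isdb00].
Qed.

Lemma induces_of (G1 G2 : SGraph) i (F : cochain G1 -> cochain G2) :
  (forall x y, F (x - y) = F x - F y) -> (forall x y, F (x + y) = F x + F y) ->
  (forall k x, inCb k x -> inCb k (F x)) ->
  (forall k x y, inCb k x -> is_db x y -> is_db (F x) (F y)) ->
  induces_hom i F.
Proof.
move=> FB FD Fin Fdb.
have F0 : F 0 = 0 by rewrite -(subrr 0) FB subrr.
have Fcob : forall y, coboundary i y -> coboundary i (F y).
  move=> y [yi Hy]; split; first exact: Fin.
  case: i yi Hy => [|k] yi; first by move=> ->.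
  by case=> x [xk db]; exists (F x); split; [exact: Fin | exact: Fdb xk db].
split.
- move=> z [zi db]; split; first exact: Fin.
  by rewrite -F0; apply: Fdb zi db.
- by move=> z z' _ _ /Fcob; rewrite FB.
- by move=> z z' _ _; rewrite FD (addrC (F z)) addrK subrr; apply: cob0.
Qed.

Lemma supp_of (G : SGraph) (e : 'I_(ne G)) k (x : cochain G) :
  is_neg_loop e -> inCb k x -> forall S, x S != 0 -> e \notin S.1.
Proof.
move=> L H S /H [_ b _]; apply/negP => eS; exact: negloop_unbal L eS b.
Qed.

Lemma fmap_inCb (G : SGraph) (e : 'I_(ne G)) k (x : cochain G) :
  inCb k x -> inCb k (fmap e x).
Proof.
move=> H S; rewrite ffunE => /H [v b c]; split.
- by rewrite -valid_phi.
- exact/balanced_del.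
- by move: c; rewrite /phi /= card_imset //; apply: lift_inj.
Qed.

Lemma fmap_db (G : SGraph) (e : 'I_(ne G)) k (x y : cochain G) :
  is_neg_loop e -> inCb k x -> is_db x y -> is_db (fmap e x) (fmap e y).
Proof.
move=> L xin db T; have supp := supp_of L xin.
split => bT; rewrite ffunE.
  have bT' : balanced (phi T).1 by apply/balanced_del.
  by rewrite (proj1 (db _) bT') -{1}(g_f supp) dd_gmap.
by rewrite (proj2 (db _)) // => /balanced_del.
Qed.

Lemma gmap_inCb (G : SGraph) (e : 'I_(ne G)) k (y : cochain (del_edge e)) :
  inCb k y -> inCb k (gmap y).
Proof.
move=> H T; case: (boolP (e \in T.1)) => eT; first by rewrite gmap_out // eqxx.
have [T' ->] := phi_surj eT; rewrite gmap_phi => /H [v b c]; split.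
- by rewrite valid_phi.
- exact/balanced_del.
- by rewrite /phi /= card_imset //; apply: lift_inj.
Qed.

Lemma gmap_db (G : SGraph) (e : 'I_(ne G)) k (y y' : cochain (del_edge e)) :
  is_neg_loop e -> inCb k y -> is_db y y' -> is_db (gmap y) (gmap y').
Proof.
move=> L _ db T; case: (boolP (e \in T.1)) => eT.
  split => [bT|_]; last by rewrite gmap_out.
  by exfalso; exact: negloop_unbal L eT bT.
have [T' ->] := phi_surj eT; rewrite gmap_phi dd_gmap; split => bT.
  by apply: (proj1 (db T')); apply/balanced_del.
by apply: (proj2 (db T')) => /balanced_del.
Qed.

Lemma fmapB (G : SGraph) (e : 'I_(ne G)) (x y : cochain G) :
  fmap e (x - y) = fmap e x - fmap e y.
Proof. by apply/ffunP => T; rewrite !ffunE. Qed.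
Lemma fmapD (G : SGraph) (e : 'I_(ne G)) (x y : cochain G) :
  fmap e (x + y) = fmap e x + fmap e y.
Proof. by apply/ffunP => T; rewrite !ffunE. Qed.
Lemma cochainB (G : SGraph) (x y : cochain G) T : (x - y) T = x T - y T.
Proof. by rewrite !ffunE. Qed.
Lemma cochainD (G : SGraph) (x y : cochain G) T : (x + y) T = x T + y T.
Proof. by rewrite !ffunE. Qed.
Lemma gmapB (G : SGraph) (e : 'I_(ne G)) (x y : cochain (del_edge e)) :
  gmap (x - y) = gmap x - gmap y.
Proof.
apply/ffunP => T; rewrite !ffunE -sumrB; apply: eq_bigr => ? _; exact: cochainB.
Qed.
Lemma gmapD (G : SGraph) (e : 'I_(ne G)) (x y : cochain (del_edge e)) :
  gmap (x + y) = gmap x + gmap y.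
Proof.
apply/ffunP => T; rewrite !ffunE -big_split; apply: eq_bigr => ? _; exact: cochainD.
Qed.

Theorem proposition5p7 (G : SGraph) (e : 'I_(ne G)) :
  is_neg_loop e -> forall i : nat, Hb_iso G (del_edge e) i.
Proof.
move=> L i; exists (fmap e), (@gmap G e); split.
- apply: induces_of.
  + exact: fmapB.
  + exact: fmapD.
  + move=> k x; exact: fmap_inCb.
  + move=> k x y; exact: fmap_db L.
- apply: induces_of.
  + exact: gmapB.
  + exact: gmapD.
  + move=> k x; exact: gmap_inCb.
  + move=> k x y; exact: gmap_db L.
- move=> z [zi _]; rewrite g_f ?subrr; first exact: cob0.
  exact: supp_of L zi.
- by move=> z _; rewrite f_g subrr; apply: cob0.
Qed.
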